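(* For each integer $r\ge3$, with $n=2^r+3$, the codewords $|\bar0\rangle=\tfrac{1}{\sqrt{2^{r+1}}}\big(\sqrt{2^r-3}\,|D^{n}_0\rangle+\sqrt{2^r+3}\,|D^{n}_{2^r}\rangle\big)$, $|\bar1\rangle=\tfrac{1}{\sqrt{2^{r+1}}}\big(\sqrt{2^r+3}\,|D^{n}_3\rangle+\sqrt{2^r-3}\,|D^{n}_{n}\rangle\big)$ span a non-additive permutationally invariant $((2^r+3,2,3))$ $n$-qubit code with transversal group $\mathsf{Q}^{(r)}$, i.e. a $((2^r+3,2,3,\mathsf{Q}^{(r)}))$ code.
   Context: $|D^n_w\rangle$ is the normalized uniform superposition of all $n$-qubit computational basis states of Hamming weight $w$. An $((n,K,d))$ code is a $K$-dimensional subspace of $n$ qubits with $\langle\phi|E|\psi\rangle=c_E\langle\phi|\psi\rangle$ for all codewords and all Pauli $E$ of weight $<d$ ($c_E$ independent of codewords). Non-additive = not a stabilizer code. Permutationally invariant: codewords invariant under all qubit permutations. With $\mathsf{X}=\begin{pmatrix}0&-i\\-i&0\end{pmatrix}$, $\mathsf{Z}=\mathrm{diag}(-i,i)$, $\mathsf{Ph}(\alpha)=\mathrm{diag}(e^{-i\alpha/2},e^{i\alpha/2})$, the generalized quaternion group is $\mathsf{Q}^{(r)}=\mathsf{BD}_{2^r}=\langle\mathsf{X},\mathsf{Z},\mathsf{Ph}(2\pi/2^r)\rangle$ (order $2^{r+2}$); e.g. $\mathsf{Q}^{(3)}$ contains $\mathsf{T}=\mathsf{Ph}(\pi/4)$.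 A code with encoding isometry $V$ has transversal group $\mathsf{G}\subset\mathrm{SU}(2)$ ($\mathsf{G}$-transversal) if $g^{\otimes n}V=V\lambda(g)$ for all $g\in\mathsf{G}$, for a faithful two-dimensional irreducible representation $\lambda$ of $\mathsf{G}$. *)

(* Defs.v *)
From HB Require Import structures.
From mathcomp Require Import all_boot all_order all_algebra all_fingroup all_field.
Set Implicit Arguments. Unset Strict Implicit. Unset Printing Implicit Defensive.
Import Order.TTheory GRing.Theory Num.Theory.
Local Open Scope ring_scope.

Definition qbasis (n : nat) := {ffun 'I_n -> bool}.
Definition qstate (n : nat) := qbasis n -> algC.
Definition qop (n : nat) := qbasis n -> qbasis n -> algC.

Definition apply_op n (A : qop n) (psi : qstate n) : qstate n :=
  fun y => \sum_(x : qbasis n) A y x * psi x.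
Definition mul_op n (A B : qop n) : qop n :=
  fun y x => \sum_(z : qbasis n) A y z * B z x.
Definition id_op n : qop n := fun y x => (y == x)%:R.
Definition inner n (phi psi : qstate n) : algC :=
  \sum_(x : qbasis n) (phi x)^* * psi x.

Definition bitidx (b : bool) : 'I_2 := if b then ord_max else ord0.
Definition mx2 (a b c d : algC) : 'M[algC]_2 :=
  \matrix_(i < 2, j < 2)
    if val i == 0%N then (if val j == 0%N then a else b)
    else (if val j == 0%N then c else d).

Definition tensor n (u : 'I_n -> 'M[algC]_2) : qop n :=
  fun y x => \prod_(i < n) u i (bitidx (y i)) (bitidx (x i)).
Definition tpow n (g : 'M[algC]_2) : qop n := tensor (fun _ : 'I_n => g).

(* Pauli matrices, indexed by 'I_4 : 0 = I, 1 = X, 2 = Y, 3 = Z *)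
Definition sigma (k : 'I_4) : 'M[algC]_2 :=
  match val k with
  | 0 => mx2 1 0 0 1
  | 1 => mx2 0 1 1 0
  | 2 => mx2 0 (- 'i) 'i 0
  | _ => mx2 1 0 0 (-1)
  end.
Definition pauli_op n (p : 'I_n -> 'I_4) : qop n := tensor (fun i => sigma (p i)).
Definition pweight n (p : 'I_n -> 'I_4) : nat := #|[pred i | p i != ord0]|.

Definition hweight n (x : qbasis n) : nat := #|[pred i | x i]|.
Definition dicke n (w : nat) : qstate n :=
  fun x => if hweight x == w then (sqrtC ('C(n, w))%:R)^-1 else 0.

Definition comb n K (w : 'I_K -> qstate n) (a : 'I_K -> algC) : qstate n :=
  fun x => \sum_(k < K) a k * w k x.
Definition in_span n K (w : 'I_K -> qstate n) (psi : qstate n) : Prop :=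
  exists a : 'I_K -> algC, forall x, psi x = comb w a x.

Definition is_code n K (d : nat) (w : 'I_K -> qstate n) : Prop :=
  (forall j k : 'I_K, inner (w j) (w k) = (j == k)%:R) /\
  forall p : 'I_n -> 'I_4, (pweight p < d)%N ->
    exists c : algC, forall phi psi, in_span w phi -> in_span w psi ->
      inner phi (apply_op (pauli_op p) psi) = c * inner phi psi.

Definition is_pauli_elt n (A : qop n) : Prop :=
  exists (k : nat) (p : 'I_n -> 'I_4), forall y x, A y x = 'i ^+ k * pauli_op p y x.

Definition stabilizer_group n (S : qop n -> Prop) : Prop :=
  [/\ forall A, S A -> is_pauli_elt A,
      S (@id_op n),
      forall A B, S A -> S B -> S (mul_op A B),
      forall A B, S A -> S B -> forall y x, mul_op A B y x = mul_op B A y x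
    & ~ (exists A, S A /\ forall y x, A y x = - id_op y x)].

Definition is_stabilizer_code n K (w : 'I_K -> qstate n) : Prop :=
  exists S : qop n -> Prop, stabilizer_group S /\
    forall psi, in_span w psi <-> (forall A, S A -> forall y, apply_op A psi y = psi y).
Definition non_additive n K (w : 'I_K -> qstate n) : Prop := ~ is_stabilizer_code w.

Definition perm_invariant n K (w : 'I_K -> qstate n) : Prop :=
  forall psi, in_span w psi ->
    forall (s : 'S_n) (x : qbasis n), psi [ffun i => x (s i)] = psi x.

Definition Xg : 'M[algC]_2 := mx2 0 (- 'i) (- 'i) 0.
Definition Zg : 'M[algC]_2 := mx2 (- 'i) 0 0 'i.
(* (2^r).-root (-1) = e^{i pi / 2^r} (root of minimal nonnegative argument) *)
Definition Phg (r : nat) : 'M[algC]_2 :=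
  let z := (2 ^ r)%N.-root (-1) in mx2 z^-1 0 0 z.
Inductive inQ (r : nat) : 'M[algC]_2 -> Prop :=
  | inQ1 : inQ r 1
  | inQX : inQ r Xg
  | inQZ : inQ r Zg
  | inQPh : inQ r (Phg r)
  | inQmul g h : inQ r g -> inQ r h -> inQ r (g *m h).

Definition faithful_irrep2 (G : 'M[algC]_2 -> Prop) (lam : 'M[algC]_2 -> 'M[algC]_2) : Prop :=
  [/\ forall g, G g -> lam g \in unitmx,
      forall g h, G g -> G h -> lam (g *m h) = lam g *m lam h,
      forall g h, G g -> G h -> lam g = lam h -> g = h
    & forall U : 'M[algC]_2, (forall g, G g -> (U *m (lam g)^T <= U)%MS) ->
        U = 0 \/ row_full U].

(* G-transversal: g^{(x)n} V = V lam(g), V the encoding isometry with columns w k *)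
Definition G_transversal n (w : 'I_2 -> qstate n) (G : 'M[algC]_2 -> Prop) : Prop :=
  exists lam, faithful_irrep2 G lam /\
    forall g, G g -> forall (k : 'I_2) (y : qbasis n),
      apply_op (@tpow n g) (w k) y = \sum_(j < 2) lam g j k * w j y.

Definition codeword0 (r : nat) : qstate (2 ^ r + 3) :=
  fun x => (sqrtC (2 ^ r.+1)%:R)^-1 *
    (sqrtC (2 ^ r - 3)%:R * @dicke (2 ^ r + 3) 0 x
     + sqrtC (2 ^ r + 3)%:R * @dicke (2 ^ r + 3) (2 ^ r) x).
Definition codeword1 (r : nat) : qstate (2 ^ r + 3) :=
  fun x => (sqrtC (2 ^ r.+1)%:R)^-1 *
    (sqrtC (2 ^ r + 3)%:R * @dicke (2 ^ r + 3) 3 x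
     + sqrtC (2 ^ r - 3)%:R * @dicke (2 ^ r + 3) (2 ^ r + 3) x).
Definition codewords (r : nat) : 'I_2 -> qstate (2 ^ r + 3) :=
  fun k => if val k == 0%N then @codeword0 r else @codeword1 r.
Arguments codeword0 r : clear implicits.
Arguments codeword1 r : clear implicits.
Arguments codewords r : clear implicits.

(* Main.v *)
Require Import Defs.
From mathcomp Require Import all_boot all_order all_algebra all_fingroup all_field.
From HB Require Import structures.
From mathcomp Require Import zify ring.
Require Import Defs.
Set Implicit Arguments. Unset Strict Implicit. Unset Printing Implicit Defensive.
Import Order.TTheory GRing.Theory Num.Theory.
Local Open Scope ring_scope.

Definition fl (k : 'I_4) : bool := (val k == 1%N) || (val k == 2%N).
Definition sp (k : 'I_4) (b : bool) : algC :=
  if val k == 2%N then (if b then -'i else 'i)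
  else if val k == 3%N then (if b then -1 else 1) else 1.

Lemma sigma_entry k b' b : sigma k (bitidx b') (bitidx b) = (b' == b (+) fl k)%:R * sp k b.
Proof.
case: k => [[|[|[|[|k]]]] Hk] //; case: b'; case: b;
  rewrite /sigma /mx2 /bitidx /fl /sp !mxE /= ?mul1r ?mulr1 ?mul0r //.
Qed.

Definition flipv n (a x : qbasis n) : qbasis n := [ffun l => x l (+) a l].
Definition flv n (p : 'I_n -> 'I_4) : qbasis n := [ffun l => fl (p l)].
Definition ph n (p : 'I_n -> 'I_4) (x : qbasis n) : algC := \prod_l sp (p l) (x l).

Lemma flipvK n (a : qbasis n) : involutive (flipv a).
Proof. by move=> x; apply/ffunP => l; rewrite !ffunE addbK. Qed.

Lemma pauli_entry n p (y x : qbasis n) :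
  pauli_op p y x = (y == flipv (flv p) x)%:R * ph p x.
Proof.
rewrite /pauli_op /tensor /ph.
rewrite (eq_bigr (fun l => (y l == x l (+) fl (p l))%:R * sp (p l) (x l))); last by move=> l _; apply: sigma_entry.
rewrite big_split /=; congr (_ * _).
case: eqP => [->|neq].
  by apply: big1 => l _; rewrite !ffunE eqxx.
have [l Hl] : exists l, y l != (flipv (flv p) x) l.
  apply/existsP; rewrite -negb_forall; apply/negP => /forallP H.
  by apply: neq; apply/ffunP => l; apply/eqP/H.
rewrite (bigD1 l) //= !ffunE in Hl *.
by rewrite (negbTE Hl) mul0r.
Qed.

Lemma apply_pauli n p (psi : qstate n) y :
  apply_op (pauli_op p) psi y = ph p (flipv (flv p) y) * psi (flipv (flv p) y).
Proof.
rewrite /apply_op (bigD1 (flipv (flv p) y)) //= big1 ?addr0.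
  by rewrite pauli_entry flipvK eqxx mul1r.
move=> x Hx; rewrite pauli_entry.
case: eqP => [E|]; last by rewrite !mul0r.
by rewrite E flipvK eqxx in Hx.
Qed.

Lemma inner_pauli n p (phi psi : qstate n) :
  inner phi (apply_op (pauli_op p) psi) =
  \sum_x (phi (flipv (flv p) x))^* * ph p x * psi x.
Proof.
rewrite /inner (reindex_inj (inv_inj (flipvK (flv p)))) /=.
by apply: eq_bigr => x _; rewrite apply_pauli flipvK mulrA.
Qed.



Lemma count_sup (T : finType) (C : {set T}) t :
  #|[set A : {set T} | C \subset A & #|A| == t]| =
  if (#|C| <= t)%N then 'C(#|T| - #|C|, t - #|C|) else 0%N.
Proof.
case: leqP => Ct; last first.
  apply: eq_card0 => A; rewrite inE; apply/negP => /andP[sCA /eqP At].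
  by move: (subset_leq_card sCA); rewrite At leqNgt Ct.
have -> : [set A : {set T} | C \subset A & #|A| == t] =
   (fun B => C :|: B) @: [set B : {set T} | B \subset ~: C & #|B| == (t - #|C|)%N].
  apply/setP => A; rewrite inE; apply/andP/imsetP.
  - case=> sCA /eqP At; exists (A :\: C).
      rewrite inE; apply/andP; split.
        by apply/subsetP => x; rewrite !inE => /andP[].
      by rewrite cardsDS // At.
    apply/setP => x; rewrite !inE; case Hx: (x \in C) => //=.
    by rewrite (subsetP sCA).
  - case=> B; rewrite inE => /andP[sBC /eqP Bt] ->; split; first exact: subsetUl.
    rewrite cardsU.
    have -> : C :&: B = set0.
      apply/setP => x; rewrite !inE; apply/negP => /andP[xC xB].
      by move: (subsetP sBC x xB); rewrite inE xC.
    by rewrite cards0 Bt; apply/eqP; lia.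
rewrite card_in_imset ?cards_draws.
  by congr 'C(_, _); move: (cardsC C); lia.
move=> B1 B2; rewrite !inE => /andP[s1 _] /andP[s2 _] E.
apply/setP => x; move/setP: E => /(_ x); rewrite !inE.
case Hx: (x \in C) => //= _.
have n1 : x \notin B1 by apply/negP => /(subsetP s1); rewrite inE Hx.
have n2 : x \notin B2 by apply/negP => /(subsetP s2); rewrite inE Hx.
by rewrite (negbTE n1) (negbTE n2).
Qed.

Lemma sum_ind (T : finType) (P : pred T) : \sum_(i : T) ((P i)%:R : algC) = (#|P|)%:R.
Proof.
rewrite -sum1_card natr_sum [RHS]big_mkcond /=; apply: eq_bigr => i _.
by case Hi: (i \in P); move: Hi; rewrite unfold_in => ->.
Qed.

Lemma sum_qbasis n (F : {set 'I_n} -> algC) :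
  \sum_(x : qbasis n) F [set l | x l] = \sum_(A : {set 'I_n}) F A.
Proof.
rewrite (reindex (fun A : {set 'I_n} => [ffun l => l \in A])) /=.
  by apply: eq_bigr => A _; congr F; apply/setP => l; rewrite !inE ffunE.
exists (fun x : qbasis n => [set l | x l]) => [A _|x _].
  by apply/setP => l; rewrite !inE ffunE.
by apply/ffunP => l; rewrite ffunE inE.
Qed.

Lemma hweightE n (x : qbasis n) : hweight x = #|[set l | x l]|.
Proof. by apply: eq_card => l; rewrite !inE. Qed.

Lemma count_nat n (C : {set 'I_n}) t :
  \sum_(x : qbasis n) ((hweight x == t) && (C \subset [set l | x l]))%:R =
  (#|[set A : {set 'I_n} | C \subset A & #|A| == t]|)%:R :> algC.
Proof.
rewrite -sum_ind -(sum_qbasis (fun A => (A \in [set A0 : {set 'I_n} | C \subset A0 & #|A0| == t])%:R)).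
by apply: eq_bigr => x _; rewrite hweightE andbC inE.
Qed.

Lemma count1 n (i : 'I_n) t :
  (n * #|[set A : {set 'I_n} | [set i] \subset A & #|A| == t]| = t * 'C(n, t))%N.
Proof.
rewrite count_sup cards1 card_ord; case: t => [|t] /=; first by rewrite muln0.
by rewrite subn1 subSS subn0 mul_bin_diag.
Qed.

Lemma count2 n (i j : 'I_n) t : i != j ->
  (n * n.-1 * #|[set A : {set 'I_n} | [set i; j] \subset A & #|A| == t]| = t * t.-1 * 'C(n, t))%N.
Proof.
move=> ij; rewrite count_sup cards2 ij card_ord; case: t => [|[|t]] /=; try by rewrite !muln0.
have -> : (n - 2 = n.-1.-1)%N by lia.
have -> : (t.+2 - 2 = t)%N by lia.
rewrite -mulnA mul_bin_diag mulnCA mul_bin_diag; lia.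
Qed.

Lemma natr_div (a b c : nat) : (a * b = c)%N -> a != 0%N -> (b%:R : algC) = c%:R / a%:R.
Proof.
move=> <- a0; rewrite natrM [_ * b%:R]mulrC mulfK //.
by rewrite pnatr_eq0.
Qed.

Lemma count_G n (i j : 'I_n) (G : bool -> bool -> algC) t : i != j ->
  \sum_(x : qbasis n) (hweight x == t)%:R * G (x i) (x j) =
  'C(n,t)%:R * G false false
  + (G true false + G false true - 2 * G false false) * (t * 'C(n,t))%:R / n%:R
  + (G true true - G true false - G false true + G false false)
      * (t * t.-1 * 'C(n,t))%:R / (n * n.-1)%:R.
Proof.
move=> ij.
have n0 : n != 0%N by case: n i {j ij} => [[]|].
have n1 : (n * n.-1 != 0)%N.
  case: n i j ij n0 => [[]|[|n]] //= i j; rewrite !ord1 //.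
pose c0 := \sum_(x : qbasis n) ((hweight x == t) && (set0 \subset [set l | x l]))%:R : algC.
pose c1 := \sum_(x : qbasis n) ((hweight x == t) && ([set i] \subset [set l | x l]))%:R : algC.
pose c2 := \sum_(x : qbasis n) ((hweight x == t) && ([set j] \subset [set l | x l]))%:R : algC.
pose c3 := \sum_(x : qbasis n) ((hweight x == t) && ([set i; j] \subset [set l | x l]))%:R : algC.
transitivity (G false false * c0 + (G true false - G false false) * c1
   + (G false true - G false false) * c2
   + (G true true - G true false - G false true + G false false) * c3).
  rewrite /c0 /c1 /c2 /c3 !mulr_sumr -!big_split /=; apply: eq_bigr => x _.
  rewrite sub0set subUset !sub1set !inE.
  by case: (hweight x == t); case: (x i); case: (x j) => /=; ring.
rewrite /c0 /c1 /c2 /c3 !count_nat.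
rewrite (natr_div (count1 i t)) // (natr_div (count1 j t)) //.
rewrite (natr_div (count2 t ij)) //.
rewrite count_sup cards0 card_ord !subn0 /=.
ring.
Qed.

Definition dk n w t : algC := if t == w then (sqrtC ('C(n,w))%:R)^-1 else 0.
Definition W0 r t := (sqrtC (2 ^ r.+1)%:R)^-1 *
    (sqrtC (2 ^ r - 3)%:R * dk (2 ^ r + 3)%N 0 t + sqrtC (2 ^ r + 3)%:R * dk (2 ^ r + 3)%N (2 ^ r)%N t).
Definition W1 r t := (sqrtC (2 ^ r.+1)%:R)^-1 *
    (sqrtC (2 ^ r + 3)%:R * dk (2 ^ r + 3)%N 3 t + sqrtC (2 ^ r - 3)%:R * dk (2 ^ r + 3)%N (2 ^ r + 3)%N t).
Definition Wf r (k : 'I_2) t := if val k == 0%N then W0 r t else W1 r t.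

Lemma cwE r k x : codewords r k x = Wf r k (hweight x).
Proof. by rewrite /codewords /Wf; case: ifP. Qed.

Lemma sqE (s a d : algC) : (s^-1 * (a * d^-1)) ^+ 2 = (a ^+ 2) / (s ^+ 2) / (d ^+ 2).
Proof. by rewrite !exprMn !exprVn mulrCA mulrA. Qed.

Lemma W0sq r t : (W0 r t)^+2 =
  ((2^r-3)%:R / (2^r.+1)%:R / ('C(2^r+3,0))%:R) * (t == 0)%N%:R
  + ((2^r+3)%:R / (2^r.+1)%:R / ('C(2^r+3, 2^r))%:R) * (t == 2^r)%N%:R.
Proof.
have m0 : (2 ^ r != 0)%N by rewrite expn_eq0.
rewrite /W0 /dk; case: (eqVneq t 0%N) => [->|t0].
  by rewrite eq_sym (negbTE m0) /= ?mulr0n ?mulr1n ?mulr0 ?mul0r ?addr0 ?add0r ?mulr1 sqE !sqrtCK.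
case: (eqVneq t (2^r)%N) => [_|tm] /=.
  by rewrite /= ?mulr0n ?mulr1n ?mulr0 ?mul0r ?addr0 ?add0r ?mulr1 sqE !sqrtCK.
by rewrite /= ?mulr0n ?mulr0 ?addr0 expr2 !mulr0.
Qed.

Lemma W1sq r t : (W1 r t)^+2 =
  ((2^r+3)%:R / (2^r.+1)%:R / ('C(2^r+3,3))%:R) * (t == 3)%N%:R
  + ((2^r-3)%:R / (2^r.+1)%:R / ('C(2^r+3, 2^r+3))%:R) * (t == 2^r+3)%N%:R.
Proof.
have m0 : (2 ^ r + 3 != 3)%N by rewrite -{2}[3%N]add0n eqn_add2r expn_eq0.
rewrite /W1 /dk; case: (eqVneq t 3%N) => [->|t0].
  by rewrite eq_sym (negbTE m0) /= ?mulr0n ?mulr1n ?mulr0 ?mul0r ?addr0 ?add0r ?mulr1 sqE !sqrtCK.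
case: (eqVneq t (2^r+3)%N) => [_|tm] /=.
  by rewrite /= ?mulr0n ?mulr1n ?mulr0 ?mul0r ?addr0 ?add0r ?mulr1 sqE !sqrtCK.
by rewrite /= ?mulr0n ?mulr0 ?addr0 expr2 !mulr0.
Qed.

Definition Vc r (G : bool -> bool -> algC) : algC :=
  G false false + (G true false + G false true - 2 * G false false) / 2
  + (G true true - G true false - G false true + G false false)
     * ((2^r - 1)%:R / (2 * (2^r + 2))%:R).

Lemma key r (k : 'I_2) (i j : 'I_(2^r+3)) (G : bool -> bool -> algC) :
  (3 <= r)%N -> i != j ->
  \sum_(x : qbasis (2^r+3)) (Wf r k (hweight x))^+2 * G (x i) (x j) = Vc r G.
Proof.
move=> r3 ij.
have m8 : (8 <= 2 ^ r)%N by rewrite -[8%N]/(2^3)%N leq_pexp2l.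
case: k => [[|[|//]] ?]; rewrite /Wf /=.
  under eq_bigr do rewrite W0sq mulrDl -!mulrA.
  rewrite big_split /= -!mulr_sumr !count_G //.
  have cn0 : ('C(2^r+3, 2^r))%:R != 0 :> algC.
    by rewrite pnatr_eq0 -lt0n bin_gt0 leq_addr.
  rewrite bin0 !mul0n /= /Vc.
  move: cn0; set c := 'C(_, _) => cn0.
  rewrite expnS.
  have [K eK] : exists K, (2^r = K + 8)%N by exists (2^r - 8)%N; lia.
  rewrite eK in cn0 *.
  have -> : (K + 8 - 3 = K + 5)%N by lia.
  have -> : (K + 8 - 1 = K + 7)%N by lia.
  have -> : ((K + 8).-1 = K + 7)%N by lia.
  have -> : ((K + 8 + 3).-1 = K + 10)%N by lia.
  rewrite !natrM !natrD.
  have h1 : K%:R + 8 != 0 :> algC by rewrite -!natrD pnatr_eq0 addn_eq0 andbF.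
  have h2 : K%:R + 10 != 0 :> algC by rewrite -!natrD pnatr_eq0 addn_eq0 andbF.
  have h3 : K%:R + 8 + 3 != 0 :> algC by rewrite -!natrD pnatr_eq0 addn_eq0 andbF.
  have h4 : K%:R + 8 + 2 != 0 :> algC by rewrite -!natrD pnatr_eq0 addn_eq0 andbF.
  have h5 : 2 != 0 :> algC by rewrite pnatr_eq0.
  by field; rewrite ?h1 ?h2 ?h3 ?h4 ?h5 ?cn0.
under eq_bigr do rewrite W1sq mulrDl -!mulrA.
rewrite big_split /= -!mulr_sumr !count_G //.
have cn0 : ('C(2^r+3, 3))%:R != 0 :> algC.
  by rewrite pnatr_eq0 -lt0n bin_gt0 leq_addl.
rewrite binn /= /Vc.
move: cn0; set c := 'C(_, _) => cn0.
rewrite expnS.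
have [K eK] : exists K, (2^r = K + 8)%N by exists (2^r - 8)%N; lia.
rewrite eK in cn0 *.
have -> : (K + 8 - 3 = K + 5)%N by lia.
have -> : (K + 8 - 1 = K + 7)%N by lia.
have -> : ((K + 8 + 3).-1 = K + 10)%N by lia.
rewrite !natrM !natrD.
have h1 : K%:R + 8 != 0 :> algC by rewrite -!natrD pnatr_eq0 addn_eq0 andbF.
have h2 : K%:R + 10 != 0 :> algC by rewrite -!natrD pnatr_eq0 addn_eq0 andbF.
have h3 : K%:R + 8 + 3 != 0 :> algC by rewrite -!natrD pnatr_eq0 addn_eq0 andbF.
have h4 : K%:R + 8 + 2 != 0 :> algC by rewrite -!natrD pnatr_eq0 addn_eq0 andbF.
have h5 : 2 != 0 :> algC by rewrite pnatr_eq0.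
by field; rewrite ?h1 ?h2 ?h3 ?h4 ?h5 ?cn0.
Qed.



Definition supp r (k : 'I_2) (t : nat) : bool :=
  if val k == 0%N then (t == 0%N) || (t == 2^r)%N else (t == 3%N) || (t == 2^r+3)%N.

Lemma Wf_supp r k t : ~~ supp r k t -> Wf r k t = 0.
Proof.
rewrite /supp /Wf /W0 /W1 /dk; case: ifP => _; rewrite negb_or => /andP[/negbTE -> /negbTE ->];
  by rewrite !mulr0 addr0 mulr0.
Qed.

Lemma Wf_ge0 r k t : 0 <= Wf r k t.
Proof.
rewrite /Wf /W0 /W1 /dk; case: ifP => _;
  apply: mulr_ge0; rewrite ?invr_ge0 ?sqrtC_ge0 ?ler0n //;
  apply: addr_ge0; apply: mulr_ge0; rewrite ?sqrtC_ge0 ?ler0n //;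
  case: ifP => _; rewrite ?invr_ge0 ?sqrtC_ge0 ?ler0n //.
Qed.

Lemma Wf_conj r k t : (Wf r k t)^* = Wf r k t.
Proof. exact: geC0_conj (Wf_ge0 r k t). Qed.

Lemma hweight2 n (x : qbasis n) i j : i != j ->
  hweight x = (x i + x j + #|[pred l | x l && (l != i) && (l != j)]|)%N.
Proof.
move=> ij; rewrite /hweight (cardD1 i) (cardD1 j) !inE (eq_sym j) ij /= addnA.
congr (_ + _)%N; apply: eq_card => l; rewrite !inE.
by case: (x l) (l != i) (l != j) => [] [] [].
Qed.

Lemma agree_wt n (x y : qbasis n) i j : i != j ->
  (forall l, l != i -> l != j -> y l = x l) ->
  (hweight y + x i + x j = hweight x + y i + y j)%N.
Proof.
move=> ij E; rewrite (hweight2 y ij) (hweight2 x ij).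
have -> : #|[pred l | y l && (l != i) && (l != j)]| = #|[pred l | x l && (l != i) && (l != j)]|.
  apply: eq_card => l; rewrite !inE.
  case: (eqVneq l i) => li; first by rewrite !andbF.
  case: (eqVneq l j) => lj; first by rewrite !andbF.
  by rewrite E.
lia.
Qed.

Lemma two_idx n (A : {set 'I_n}) : (1 < n)%N -> (#|A| <= 2)%N ->
  exists i j, i != j /\ A \subset [set i; j].
Proof.
move=> n1 A2.
have n0 : (0 < n)%N by apply: ltnW.
pose i0 := Ordinal n0; pose i1 := Ordinal n1.
have i01 : i0 != i1 by [].
case: (ltngtP #|A| 1) => [A0|A3|/eqP/cards1P[a ->]].
- have -> : A = set0 by apply: cards0_eq; lia.
  by exists i0, i1; rewrite sub0set.
- have /cards2P[a [b [ab ->]]] : #|A| == 2%N by rewrite eqn_leq A2 A3.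
  by exists a, b.
- case: (eqVneq a i0) => [->|ai].
    by exists i0, i1; split => //; rewrite sub1set !inE eqxx.
  by exists a, i0; split => //; rewrite sub1set !inE eqxx.
Qed.

Lemma m8 r : (3 <= r)%N -> (8 <= 2 ^ r)%N.
Proof. by move=> r3; rewrite -[8%N]/(2^3)%N leq_pexp2l. Qed.

Lemma Wf_mul_diag r j k t : (3 <= r)%N ->
  Wf r j t * Wf r k t = (j == k)%:R * Wf r k t ^+ 2.
Proof.
move=> r3; have := m8 r3 => h8.
case: (eqVneq j k) => [->|jk]; first by rewrite mul1r expr2.
rewrite mul0r.
case sj: (supp r j t); last by rewrite Wf_supp ?sj // mul0r.
case sk: (supp r k t); last by rewrite (Wf_supp (k:=k)) ?sk // mulr0.
exfalso; move: sj sk jk; rewrite /supp.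
case: j => [[|[|//]] ?]; case: k => [[|[|//]] ?] //= /orP[] /eqP -> /orP[] /eqP; lia.
Qed.

Lemma ph2 n (p : 'I_n -> 'I_4) i j (x : qbasis n) : i != j ->
  (forall l, l != i -> l != j -> p l = ord0) ->
  ph p x = sp (p i) (x i) * sp (p j) (x j).
Proof.
move=> ij hp; rewrite /ph (bigD1 i) // (bigD1 j) /=; last by rewrite eq_sym.
rewrite big1 ?mulr1 // => l /andP[li lj]; by rewrite hp.
Qed.

Lemma flip_agree n (p : 'I_n -> 'I_4) i j (x : qbasis n) :
  (forall l, l != i -> l != j -> p l = ord0) ->
  forall l, l != i -> l != j -> flipv (flv p) x l = x l.
Proof. by move=> hp l li lj; rewrite !ffunE hp // addbF. Qed.

Definition Gp n (p : 'I_n -> 'I_4) i j (b1 b2 : bool) : algC :=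
  ((b1 + b2 == (b1 (+) fl (p i)) + (b2 (+) fl (p j)))%N)%:R * (sp (p i) b1 * sp (p j) b2).

Lemma pointwise r (p : 'I_(2^r+3) -> 'I_4) i j (j' k : 'I_2) x : (3 <= r)%N -> i != j ->
  (forall l, l != i -> l != j -> p l = ord0) ->
  (codewords r j' (flipv (flv p) x))^* * ph p x * codewords r k x =
  (j' == k)%:R * ((Wf r k (hweight x))^+2 * Gp p i j (x i) (x j)).
Proof.
move=> r3 ij hp; have h8 := m8 r3.
rewrite !cwE Wf_conj (ph2 _ ij hp) /Gp.
set y := flipv (flv p) x.
have A := agree_wt ij (flip_agree x hp).
have yi : y i = x i (+) fl (p i) by rewrite /y !ffunE.
have yj : y j = x j (+) fl (p j) by rewrite /y !ffunE.
rewrite -yi -yj -/y in A *.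
have := leq_b1 (x i); have := leq_b1 (x j); have := leq_b1 (y i); have := leq_b1 (y j) => b1 b2 b3 b4.
case: (eqVneq (hweight y) (hweight x)) => E.
  have -> : (x i + x j == y i + y j)%N by apply/eqP; lia.
  by rewrite E mul1r mulrAC Wf_mul_diag //; ring.
have -> : (x i + x j == y i + y j)%N = false by apply/negbTE/eqP; lia.
rewrite mul0r mulr0 mulr0.
case sj: (supp r j' (hweight y)); last by rewrite Wf_supp ?sj // !mul0r.
case sk: (supp r k (hweight x)); last by rewrite (Wf_supp (k:=k)) ?sk // mulr0.
exfalso; move: sj sk E; rewrite /supp.
case: j' => [[|[|//]] ?]; case: k => [[|[|//]] ?] //= /orP[] /eqP h1 /orP[] /eqP h2; lia.
Qed.

Lemma inner_ext n (phi phi' psi psi' : qstate n) :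
  (forall x, phi x = phi' x) -> (forall x, psi x = psi' x) -> inner phi psi = inner phi' psi'.
Proof. by move=> E1 E2; apply: eq_bigr => x _; rewrite E1 E2. Qed.

Lemma apply_ext n (A : qop n) (psi psi' : qstate n) :
  (forall x, psi x = psi' x) -> forall y, apply_op A psi y = apply_op A psi' y.
Proof. by move=> E y; apply: eq_bigr => x _; rewrite E. Qed.

Lemma apply_comb n K (A : qop n) (w : 'I_K -> qstate n) b y :
  apply_op A (comb w b) y = \sum_k b k * apply_op A (w k) y.
Proof.
rewrite /apply_op /comb.
under eq_bigr do rewrite mulr_sumr.
rewrite exchange_big /=; apply: eq_bigr => k _; rewrite mulr_sumr.
by apply: eq_bigr => x _; rewrite mulrCA.
Qed.

Lemma inner_comb n K (w : 'I_K -> qstate n) a (f : 'I_K -> qstate n) b :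
  inner (comb w a) (fun y => \sum_k b k * f k y) =
  \sum_j \sum_k (a j)^* * b k * inner (w j) (f k).
Proof.
rewrite /inner /comb.
under eq_bigr do rewrite rmorph_sum mulr_suml.
rewrite exchange_big /=; apply: eq_bigr => j _.
under eq_bigr do rewrite mulr_sumr.
rewrite exchange_big /=; apply: eq_bigr => k _.
rewrite mulr_sumr; apply: eq_bigr => x _; rewrite rmorphM /=; ring.
Qed.

Lemma ord_lt n i : (i < n)%N -> 'I_n.
Proof. exact: Ordinal. Qed.

Lemma Mjk r (p : 'I_(2^r+3) -> 'I_4) : (3 <= r)%N -> (pweight p < 3)%N ->
  exists c, forall j' k : 'I_2,
    inner (codewords r j') (apply_op (pauli_op p) (codewords r k)) = (j' == k)%:R * c.
Proof.
move=> r3 pw.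
have n1 : (1 < 2^r+3)%N by rewrite ltn_addl.
have pA : (#|[set l | p l != ord0]| <= 2)%N.
  by rewrite -ltnS; apply: leq_trans pw; rewrite cardsE.
have [i [j [ij sA]]] := @two_idx _ [set l | p l != ord0] n1 pA.
have hp : forall l, l != i -> l != j -> p l = ord0.
  move=> l li lj; apply/eqP.
  have : l \notin [set l | p l != ord0].
    by apply/negP => /(subsetP sA); rewrite !inE (negbTE li) (negbTE lj).
  by rewrite inE negbK.
exists (Vc r (Gp p i j)) => j' k.
rewrite inner_pauli.
under eq_bigr => x _ do rewrite (@pointwise r p i j j' k x r3 ij hp).
by rewrite -mulr_sumr key.
Qed.

Lemma orthonormal r (j' k : 'I_2) : (3 <= r)%N ->
  inner (codewords r j') (codewords r k) = (j' == k)%:R.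
Proof.
move=> r3.
have n1 : (1 < 2^r+3)%N by rewrite ltn_addl.
have n0 : (0 < 2^r+3)%N by apply: ltnW.
have ij : Ordinal n0 != Ordinal n1 by [].
rewrite /inner.
under eq_bigr do rewrite !cwE Wf_conj Wf_mul_diag // -[_ * _ ^+ 2]mulr1 -mulrA.
rewrite -mulr_sumr (key _ (fun _ _ => 1) r3 ij) /Vc.
have -> : 1 + (1 + 1 - 2 * 1) / 2 + (1 - 1 - 1 + 1) * ((2 ^ r - 1)%:R / (2 * (2 ^ r + 2))%:R) = 1 :> algC.
  by ring.
by rewrite mulr1.
Qed.

Lemma is_code_main r : (3 <= r)%N -> is_code 3 (codewords r).
Proof.
move=> r3; split; first by move=> j k; apply: orthonormal.
move=> p pw; have [c Hc] := Mjk r3 pw.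
exists c => phi psi [a Ha] [b Hb].
have E1 : inner phi (apply_op (pauli_op p) psi) = inner (comb (codewords r) a)
   (fun y => \sum_k b k * apply_op (pauli_op p) (codewords r k) y).
  by apply: inner_ext => // y; rewrite (apply_ext _ Hb) apply_comb.
have E2 : inner phi psi = inner (comb (codewords r) a) (fun y => \sum_k b k * codewords r k y).
  by apply: inner_ext => // y; rewrite Hb.
rewrite E1 E2 !inner_comb mulr_sumr; apply: eq_bigr => j' _; rewrite mulr_sumr; apply: eq_bigr => k _.
by rewrite Hc orthonormal //; ring.
Qed.



Lemma perm_main r : perm_invariant (codewords r).
Proof.
move=> psi [a Ha] s x; rewrite !Ha /comb; apply: eq_bigr => k _; rewrite !cwE.
congr (_ * Wf _ _ _); rewrite !hweightE.
rewrite -(card_preimset [set l | x l] (@perm_inj _ s)); apply: eq_card => l.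
by rewrite !inE ffunE.
Qed.

Lemma Wf_neq0 r k t : (3 <= r)%N -> supp r k t -> Wf r k t != 0.
Proof.
move=> r3; have h8 := m8 r3.
have sq0 (N : nat) : (0 < N)%N -> sqrtC N%:R != 0 :> algC.
  by move=> N0; rewrite sqrtC_eq0 pnatr_eq0 -lt0n.
have bn (N M : nat) : (M <= N)%N -> (sqrtC 'C(N, M)%:R)^-1 != 0 :> algC.
  by move=> MN; rewrite invr_eq0 sq0 // bin_gt0.
have s0 : (sqrtC (2 ^ r.+1)%:R)^-1 != 0 :> algC by rewrite invr_eq0 sq0 // expn_gt0.
rewrite /supp /Wf /W0 /W1 /dk; case: ifP => _ /orP[] /eqP ->.
- rewrite eqxx (_ : (0 == 2^r)%N = false); last by apply/eqP; lia.
  by rewrite mulr0 addr0 mulf_neq0 // mulf_neq0 // ?sq0 ?bn //; lia.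
- rewrite eqxx (_ : (2^r == 0)%N = false); last by apply/eqP; lia.
  by rewrite mulr0 add0r mulf_neq0 // mulf_neq0 // ?sq0 ?bn //; lia.
- rewrite eqxx (_ : (3 == 2^r+3)%N = false); last by apply/eqP; lia.
  by rewrite mulr0 addr0 mulf_neq0 // mulf_neq0 // ?sq0 ?bn //; lia.
- rewrite eqxx (_ : (2^r+3 == 3)%N = false); last by apply/eqP; lia.
  by rewrite mulr0 add0r mulf_neq0 // mulf_neq0 // ?sq0 ?bn //; lia.
Qed.

Lemma i_neq0 : 'i != 0 :> algC.
Proof. exact: neq0Ci. Qed.

Lemma sp_neq0 k b : sp k b != 0.
Proof.
rewrite /sp; case: ifP => _; first by case: b; rewrite ?oppr_eq0 i_neq0.
case: ifP => _; last exact: oner_neq0.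
by case: b; rewrite ?oppr_eq0 oner_neq0.
Qed.

Lemma ph_neq0 n p (x : qbasis n) : ph p x != 0.
Proof. by apply/prodf_neq0 => l _; apply: sp_neq0. Qed.

Lemma sp_false k : ~~ fl k -> sp k false = 1.
Proof. by case: k => [[|[|[|[|k]]]] Hk]. Qed.

Lemma sp_sq k : ~~ fl k -> sp k true ^+ 2 = 1.
Proof. by case: k => [[|[|[|[|k]]]] Hk] //= _; rewrite /sp /= ?expr1n // sqrrN expr1n. Qed.

Lemma ph_set n p (B : {set 'I_n}) : (forall l, ~~ fl (p l)) ->
  ph p [ffun l => l \in B] = \prod_(l in B) sp (p l) true.
Proof.
move=> H; rewrite /ph [RHS]big_mkcond /=; apply: eq_bigr => l _; rewrite ffunE.
by case: (l \in B) => //; rewrite sp_false.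
Qed.

Lemma wt_set n (B : {set 'I_n}) : hweight [ffun l => l \in B] = #|B|.
Proof. by apply: eq_card => l; rewrite !inE ffunE. Qed.

Lemma apply_elt n (A : qop n) (c : algC) p psi y :
  (forall y x, A y x = c * pauli_op p y x) ->
  apply_op A psi y = c * (ph p (flipv (flv p) y) * psi (flipv (flv p) y)).
Proof.
move=> HA; rewrite -apply_pauli /apply_op mulr_sumr; apply: eq_bigr => x _.
by rewrite HA mulrA.
Qed.

Lemma supp_of r k t : Wf r k t != 0 -> supp r k t.
Proof. by apply: contraR => /Wf_supp ->. Qed.

Lemma set3 n (u v w : 'I_n) (F : 'I_n -> algC) : u != v -> u != w -> v != w ->
  #|[set u; v; w]| = 3%N /\ \prod_(l in [set u; v; w]) F l = F u * F v * F w.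
Proof.
move=> uv uw vw.
have e : [set u; v; w] = u |: (v |: [set w]) by apply/setP => l; rewrite !inE orbA.
rewrite e; split.
  by rewrite !cardsU1 !inE cards1 negb_or uv uw vw.
by rewrite !big_setU1 ?big_set1 /= ?mulrA // ?inE ?negb_or ?uv ?uw ?vw.
Qed.

Lemma fix_e r (A : qop (2^r+3)) k p (i0 i1 i2 i3 : 'I_(2^r+3)) : (3 <= r)%N ->
  i0 != i1 -> i0 != i2 -> i0 != i3 -> i1 != i2 -> i1 != i3 -> i2 != i3 ->
  (forall y x, A y x = 'i ^+ k * pauli_op p y x) ->
  (forall (j : 'I_2) y, apply_op A (codewords r j) y = codewords r j y) ->
  forall y, apply_op A (fun y => (y == [ffun l => l \in [set i0]])%:R) y =
            (y == [ffun l => l \in [set i0]])%:R.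
Proof.
move=> r3 d01 d02 d03 d12 d13 d23 HA Hfix; have h8 := m8 r3.
pose c : algC := 'i ^+ k; pose a := flv p.
have key1 : forall j y, c * (ph p (flipv a y) * codewords r j (flipv a y)) = codewords r j y.
  by move=> j y; rewrite -(apply_elt _ _ HA) Hfix.
pose z : qbasis (2^r+3) := [ffun _ => false].
have wz : hweight z = 0%N by apply: eq_card0 => l; rewrite !inE ffunE.
have w0z : codewords r ord0 z != 0 by rewrite cwE wz Wf_neq0.
have c0 : c != 0 by rewrite expf_neq0 // neq0Ci.
pose one : 'I_2 := Ordinal (isT : (1 < 2)%N).
have a0 : forall l, a l = false.
  have := key1 ord0 a.
  have -> : flipv a a = z by apply/ffunP => l; rewrite !ffunE addbb.
  move=> E.
  have : codewords r ord0 a != 0 by rewrite -E mulf_neq0 // mulf_neq0 // ph_neq0.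
  rewrite cwE => /supp_of; rewrite /supp /= => /orP[/eqP H|/eqP H].
    by move=> l; have := card0_eq H l; rewrite !inE.
  exfalso.
  have [B] : exists B, B \in [set B : {set 'I_(2^r+3)} | B \subset [set l | a l] & #|B| == 3%N].
    apply/card_gt0P; rewrite cards_draws bin_gt0 -hweightE H; lia.
  rewrite inE => /andP[sB /eqP B3].
  pose x : qbasis (2^r+3) := [ffun l => l \in B].
  have := key1 one (flipv a x); rewrite flipvK => E2.
  have : codewords r one (flipv a x) != 0.
    by rewrite -E2 mulf_neq0 // mulf_neq0 // ?ph_neq0 // cwE wt_set B3 Wf_neq0.
  rewrite cwE => /supp_of; rewrite /supp /=.
  have -> : hweight (flipv a x) = (2^r - 3)%N.
    rewrite hweightE (_ : [set l | flipv a x l] = [set l | a l] :\: B).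
      by rewrite cardsDS // B3 -hweightE H.
    apply/setP => l; rewrite !inE !ffunE; case: (boolP (l \in B)) => lB /=.
      by have := subsetP sB l lB; rewrite inE /a ffunE => ->.
    by rewrite /a.
  move/orP => [] /eqP; lia.
have fz : forall y, flipv a y = y by move=> y; apply/ffunP => l; rewrite ffunE a0 addbF.
have nf : forall l, ~~ fl (p l) by move=> l; have := a0 l; rewrite /a ffunE => ->.
have key2 : forall j y, c * (ph p y * codewords r j y) = codewords r j y.
  by move=> j y; rewrite -{2}(key1 j y) fz.
have c1 : c = 1.
  have := key2 ord0 z.
  have -> : ph p z = 1 by rewrite /ph big1 // => l _; rewrite ffunE sp_false.
  rewrite mul1r => E; apply: (mulIf w0z); by rewrite E mul1r.
pose s l := sp (p l) true.
have trip : forall u v w, u != v -> u != w -> v != w -> s u * s v * s w = 1.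
  move=> u v w uv uw vw; have [c3 p3] := set3 s uv uw vw.
  pose y : qbasis (2^r+3) := [ffun l => l \in [set u; v; w]].
  have := key2 one y; rewrite c1 mul1r => E.
  have ne : codewords r one y != 0 by rewrite cwE wt_set c3 Wf_neq0.
  have : ph p y = 1 by apply: (mulIf ne); rewrite E mul1r.
  by rewrite ph_set // p3.
have s0 : s i0 = 1.
  have t1 := trip _ _ _ d01 d02 d12.
  have t2 := trip _ _ _ d01 d03 d13.
  have t3 := trip _ _ _ d02 d03 d23.
  have n01 : s i0 * s i1 != 0 by rewrite mulf_neq0 // sp_neq0.
  have e23 : s i2 = s i3 by apply: (mulfI n01); rewrite t1 t2.
  have q2 : s i2 ^+ 2 = 1 by apply: sp_sq.
  by rewrite -t3 -e23 -mulrA -expr2 q2 mulr1.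
move=> y; rewrite (apply_elt _ _ HA) -/c -/a fz c1 mul1r.
case: eqP => [->|_]; last by rewrite mulr0.
by rewrite mulr1 ph_set // big_set1.
Qed.

Lemma span_cw r (j : 'I_2) : in_span (codewords r) (codewords r j).
Proof.
exists (fun k => (k == j)%:R) => x; rewrite /comb (bigD1 j) //= eqxx mul1r big1 ?addr0 //.
by move=> k kj; rewrite (negbTE kj) mul0r.
Qed.

Lemma nonadd_main r : (3 <= r)%N -> non_additive (codewords r).
Proof.
move=> r3 [S [[HP Hid Hmul Hcomm Hneg] HS]]; have h8 := m8 r3.
have h0 : (0 < 2^r+3)%N by lia.
have h1 : (1 < 2^r+3)%N by lia.
have h2 : (2 < 2^r+3)%N by lia.
have h3 : (3 < 2^r+3)%N by lia.
pose i0 := Ordinal h0; pose i1 := Ordinal h1; pose i2 := Ordinal h2; pose i3 := Ordinal h3.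
pose x0 : qbasis (2^r+3) := [ffun l => l \in [set i0]].
have : in_span (codewords r) (fun y => (y == x0)%:R).
  apply/HS => A SA; have [k [p HA]] := HP A SA.
  apply: (@fix_e r A k p i0 i1 i2 i3) => // j y.
  exact: (proj1 (HS _) (span_cw r j) A SA).
case=> a Ha; have := Ha x0; rewrite eqxx /comb big1 => [/eqP|k _].
  by rewrite oner_eq0.
rewrite cwE wt_set cards1 Wf_supp ?mulr0 //.
by rewrite /supp; case: ifP => _; apply/negP => /orP[] /eqP; lia.
Qed.



Lemma mx2E (a b c d : algC) (i j : 'I_2) :
  mx2 a b c d i j = if val i == 0%N then (if val j == 0%N then a else b)
                    else (if val j == 0%N then c else d).
Proof. by rewrite mxE. Qed.

Lemma mx2_mul (a b c d a' b' c' d' : algC) :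
  mx2 a b c d *m mx2 a' b' c' d' =
  mx2 (a * a' + b * c') (a * b' + b * d') (c * a' + d * c') (c * b' + d * d').
Proof.
apply/matrixP => i j; rewrite !mxE big_ord_recr big_ord1 /= !mxE.
by case: i => [[|[|//]] ?]; case: j => [[|[|//]] ?].
Qed.

Lemma mx2_one : (1%:M : 'M[algC]_2) = mx2 1 0 0 1.
Proof.
by apply/matrixP => i j; rewrite !mxE; case: i => [[|[|//]] ?]; case: j => [[|[|//]] ?].
Qed.

Lemma mx2_tr (a b c d : algC) : (mx2 a b c d)^T = mx2 a c b d.
Proof.
by apply/matrixP => i j; rewrite !mxE; case: i => [[|[|//]] ?]; case: j => [[|[|//]] ?].
Qed.

Lemma mx2_inj (a b c d a' b' c' d' : algC) :
  mx2 a b c d = mx2 a' b' c' d' -> [/\ a = a', b = b', c = c' & d = d'].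
Proof.
move=> E.
have e i j : mx2 a b c d i j = mx2 a' b' c' d' i j by rewrite E.
have := e ord0 ord0; have := e ord0 ord_max; have := e ord_max ord0; have := e ord_max ord_max.
by rewrite !mxE /=.
Qed.

Definition zeta r : algC := (2 ^ r)%N.-root (-1).
Definition Dm r (k : nat) : 'M[algC]_2 := mx2 ((zeta r)^-1 ^+ k) 0 0 (zeta r ^+ k).

Lemma zetaM r : zeta r ^+ (2 ^ r) = -1.
Proof. by rewrite /zeta rootCK // expn_gt0. Qed.

Lemma zeta_neq0 r : zeta r != 0.
Proof.
apply/negP => /eqP z0; have := zetaM r; rewrite z0 expr0n expn_eq0 /= => /eqP.
by rewrite eq_sym oppr_eq0 oner_eq0.
Qed.

Lemma zeta2M r : zeta r ^+ (2 ^ r.+1) = 1.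
Proof. by rewrite expnS mulnC exprM zetaM sqrrN expr1n. Qed.

Lemma zetaV r k : (zeta r)^-1 ^+ k * zeta r ^+ k = 1.
Proof. by rewrite -exprMn_comm ?mulVf ?expr1n ?zeta_neq0 //; apply: mulrC. Qed.

Lemma zetaVM r q : (zeta r)^-1 ^+ (q * 2 ^ r) = zeta r ^+ (q * 2 ^ r).
Proof. by rewrite mulnC !exprM exprVn zetaM invrN1. Qed.

Lemma Dm_add r k l : Dm r k *m Dm r l = Dm r (k + l).
Proof. by rewrite /Dm mx2_mul !mulr0 !mul0r !addr0 !add0r !exprD. Qed.

Lemma Dm0 r : Dm r 0 = 1%:M.
Proof. by rewrite /Dm !expr0 mx2_one. Qed.

Lemma Dm_1 r : Dm r 1 = Phg r.
Proof. by rewrite /Dm /Phg !expr1. Qed.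

Definition lneg r (l : nat) := (l * (2 ^ r.+1).-1)%N.

Lemma zeta_lneg r l : zeta r ^+ lneg r l = (zeta r)^-1 ^+ l.
Proof.
have e : zeta r ^+ lneg r l * zeta r ^+ l = 1.
  rewrite -exprD /lneg -{2}[l]muln1 -mulnDr addn1 prednK ?expn_gt0 //.
  by rewrite mulnC exprM zeta2M expr1n.
apply: (mulIf (x := zeta r ^+ l)); first by rewrite expf_neq0 // zeta_neq0.
by rewrite e zetaV.
Qed.

Lemma zetaV_lneg r l : (zeta r)^-1 ^+ lneg r l = zeta r ^+ l.
Proof.
by rewrite exprVn zeta_lneg exprVn invrK.
Qed.

Lemma X_Dm r l : Xg *m Dm r l = Dm r (lneg r l) *m Xg.
Proof.
rewrite /Xg /Dm !mx2_mul !mulr0 !mul0r !addr0 !add0r zeta_lneg zetaV_lneg.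
by congr mx2; rewrite mulrC.
Qed.

Lemma XX r : Xg *m Xg = Dm r (2 ^ r).
Proof.
rewrite /Xg /Dm mx2_mul !mulr0 !mul0r !addr0 !add0r exprVn zetaM invrN1.
by rewrite mulrNN mulCii.
Qed.

Lemma Zg_Dm r : (1 <= r)%N -> exists q, Zg = Dm r q.
Proof.
move=> r1; pose u := zeta r ^+ (2 ^ r.-1).
have u2 : u ^+ 2 = -1 by rewrite /u -exprM -expnSr prednK // zetaM.
have : (u - 'i) * (u + 'i) == 0.
  by rewrite -subr_sqr u2 sqrCi subrr.
rewrite mulf_eq0 => /orP[|] /eqP H.
  have ui : u = 'i by apply/eqP; rewrite -subr_eq0 H.
  exists (2 ^ r.-1)%N; rewrite /Dm /Zg exprVn -/u ui invCi //.
have ui : u = - 'i by apply/eqP; rewrite -subr_eq0 opprK H.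
have u3 : zeta r ^+ (3 * 2 ^ r.-1) = 'i.
  by rewrite mulnC exprM -/u ui exprS sqrrN sqrCi mulrN mulr1 opprK.
by exists (3 * 2 ^ r.-1)%N; rewrite /Dm /Zg exprVn u3 invCi.
Qed.

Definition Dform r (g : 'M[algC]_2) := exists k, g = Dm r k \/ g = Dm r k *m Xg.

Lemma classify r g : (1 <= r)%N -> inQ r g -> Dform r g.
Proof.
move=> r1; elim => [| | | |g1 h1 _ [k [->|->]] _ [l [->|->]]].
- by exists 0%N; left; rewrite Dm0.
- by exists 0%N; right; rewrite Dm0 mul1mx.
- by have [q ->] := Zg_Dm r1; exists q; left.
- by exists 1%N; left; rewrite Dm_1.
- by exists (k + l)%N; left; rewrite Dm_add.
- by exists (k + l)%N; right; rewrite mulmxA Dm_add.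
- by exists (k + lneg r l)%N; right; rewrite -mulmxA X_Dm mulmxA Dm_add.
- exists (k + lneg r l + 2 ^ r)%N; left.
  by rewrite -mulmxA (mulmxA Xg) X_Dm -mulmxA (XX r) !Dm_add addnA.
Qed.

Lemma Dm_inQ r k : inQ r (Dm r k).
Proof.
elim: k => [|k IH]; first by rewrite Dm0; exact: inQ1.
by rewrite -addn1 -Dm_add Dm_1; apply: inQmul => //; exact: inQPh.
Qed.

Lemma bit_sum (F : 'I_2 -> algC) : \sum_(c < 2) F c = \sum_(b : bool) F (bitidx b).
Proof.
rewrite big_ord_recr big_ord1 big_bool /= addrC; congr (_ + _); congr F; exact: val_inj.
Qed.

Lemma tpow_mul n (g h : 'M[algC]_2) (psi : qstate n) y :
  apply_op (@tpow n (g *m h)) psi y = apply_op (@tpow n g) (apply_op (@tpow n h) psi) y.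
Proof.
rewrite /apply_op /tpow /tensor.
have E : forall x : qbasis n, \prod_(i < n) (g *m h) (bitidx (y i)) (bitidx (x i)) =
   \sum_(z : qbasis n) (\prod_(i < n) g (bitidx (y i)) (bitidx (z i))) *
                       (\prod_(i < n) h (bitidx (z i)) (bitidx (x i))).
  move=> x.
  rewrite (eq_bigr (fun i => \sum_(b : bool) g (bitidx (y i)) (bitidx b) * h (bitidx b) (bitidx (x i)))); last first.
    by move=> i _; rewrite mxE bit_sum.
  rewrite bigA_distr_bigA /=; apply: eq_bigr => z _; by rewrite -big_split.
under eq_bigr do rewrite E mulr_suml.
rewrite exchange_big /=; apply: eq_bigr => z _; rewrite mulr_sumr.
by apply: eq_bigr => x _; rewrite mulrA.
Qed.

Lemma mx2_bit (a b c d : algC) u v :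
  mx2 a b c d (bitidx u) (bitidx v) = if u then (if v then d else c) else (if v then b else a).
Proof. by rewrite mxE; case: u; case: v. Qed.

Lemma prod_bool_sel n (y : qbasis n) (F : 'I_n -> algC) :
  (forall i, y i -> F i = 0) \/ True -> True.
Proof. by []. Qed.

Lemma prod_if n (y : qbasis n) (a b : algC) :
  \prod_(i < n) (if y i then b else a) = a ^+ (n - hweight y) * b ^+ (hweight y).
Proof.
rewrite (bigID (fun i => y i)) /=.
rewrite (eq_bigr (fun _ => b)); last by move=> i ->.
rewrite [X in _ * X](eq_bigr (fun _ => a)); last by move=> i /negbTE ->.
rewrite !prodr_const mulrC; congr (_ ^+ _ * _ ^+ _).
have H : (hweight y + #|[predC [pred i | y i]]| = n)%N by rewrite /hweight cardC card_ord.
transitivity #|[predC [pred i | y i]]|; first by apply: eq_card => i; rewrite !inE.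
lia.
Qed.

Definition cmpl n (y : qbasis n) : qbasis n := [ffun i => ~~ y i].

Lemma cmplK n : involutive (@cmpl n).
Proof. by move=> y; apply/ffunP => i; rewrite !ffunE negbK. Qed.

Lemma tpow_diag n (a b : algC) (psi : qstate n) y :
  apply_op (@tpow n (mx2 a 0 0 b)) psi y = a ^+ (n - hweight y) * b ^+ (hweight y) * psi y.
Proof.
rewrite /apply_op (bigD1 y) //= big1 ?addr0.
  rewrite /tpow /tensor -prod_if; congr (_ * _); apply: eq_bigr => i _.
  by rewrite mx2_bit; case: (y i).
move=> x xy; rewrite /tpow /tensor.
have [i yi] : exists i, y i != x i.
  apply/existsP; rewrite -negb_forall; apply/negP => /forallP H.
  by move/negP: xy; apply; apply/eqP/ffunP => i; apply/eqP; rewrite eq_sym H.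
by rewrite (bigD1 i) //= mx2_bit; move: yi; case: (y i); case: (x i); rewrite ?mul0r.
Qed.

Lemma tpow_anti n (c : algC) (psi : qstate n) y :
  apply_op (@tpow n (mx2 0 c c 0)) psi y = c ^+ n * psi (cmpl y).
Proof.
rewrite /apply_op (bigD1 (cmpl y)) //= big1 ?addr0.
  rewrite /tpow /tensor; congr (_ * _).
  rewrite (eq_bigr (fun _ => c)) ?prodr_const ?card_ord //.
  by move=> i _; rewrite mx2_bit ffunE; case: (y i).
move=> x xy; rewrite /tpow /tensor.
have [i yi] : exists i, x i != cmpl y i.
  apply/existsP; rewrite -negb_forall; apply/negP => /forallP H.
  by move/negP: xy; apply; apply/eqP/ffunP => i; apply/eqP; rewrite H.
by rewrite (bigD1 i) //= mx2_bit; move: yi; rewrite ffunE; case: (y i); case: (x i); rewrite ?mul0r.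
Qed.



Definition Rep r (g M : 'M[algC]_2) := forall (j : 'I_2) y,
  apply_op (@tpow (2^r+3) g) (codewords r j) y = \sum_(l < 2) M l j * codewords r l y.

Lemma sum2 (F : 'I_2 -> algC) : \sum_(l < 2) F l = F ord0 + F ord_max.
Proof. by rewrite big_ord_recr big_ord1; congr (F _ + _); apply: val_inj. Qed.

Lemma hweight_le n (y : qbasis n) : (hweight y <= n)%N.
Proof. by rewrite /hweight -[X in (_ <= X)%N]card_ord max_card. Qed.

Lemma Rep_Dm r k : (3 <= r)%N -> Rep r (Dm r k) (Dm r (k * (2^r+3))).
Proof.
move=> r3 j y; have h8 := m8 r3.
rewrite /Dm tpow_diag sum2 !mxE /=.
have hle := hweight_le y.
case: j => [[|[|//]] Hj] /=.
- rewrite mul0r addr0 (_ : ord0 = Ordinal Hj); last exact: val_inj.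
  case S: (supp r (Ordinal Hj) (hweight y)); last first.
    by rewrite cwE Wf_supp ?S // !mulr0.
  move: S; rewrite /supp /= => /orP[] /eqP ->.
    by rewrite subn0 expr0 mulr1 -exprM mulnC.
  have -> : (2 ^ r + 3 - 2 ^ r = 3)%N by lia.
  rewrite -!exprM -zetaVM mulnDr -exprD; congr (_ * _); congr (_ ^+ _); lia.
- rewrite mul0r add0r.
  have e1 : ord_max = Ordinal Hj by apply: val_inj.
  rewrite e1.
  case S: (supp r (Ordinal Hj) (hweight y)); last first.
    by rewrite cwE Wf_supp ?S // !mulr0.
  move: S; rewrite /supp /= => /orP[] /eqP ->.
    have -> : (2 ^ r + 3 - 3 = 2 ^ r)%N by lia.
    rewrite -!exprM [X in X * _ * _]zetaVM mulnDr exprD; congr (_ * _); congr (_ ^+ _); lia.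
  by rewrite subnn expr0 mul1r -exprM mulnC.
Qed.

Lemma hweight_cmpl n (y : qbasis n) : hweight (cmpl y) = (n - hweight y)%N.
Proof.
have H : (hweight y + #|[predC [pred i | y i]]| = n)%N by rewrite /hweight cardC card_ord.
transitivity #|[predC [pred i | y i]]|; first by apply: eq_card => i; rewrite !inE ffunE.
lia.
Qed.

Lemma dk_sym n w t : (t <= n)%N -> (w <= n)%N -> dk n w (n - t)%N = dk n (n - w)%N t.
Proof.
move=> tn wn; rewrite /dk bin_sub //.
have -> : (n - t == w)%N = (t == n - w)%N by apply/eqP/eqP; lia.
by [].
Qed.

Lemma W0_cmpl r t : (3 <= r)%N -> (t <= 2^r+3)%N -> W0 r (2^r + 3 - t)%N = W1 r t.
Proof.
move=> r3 tn; have h8 := m8 r3.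
rewrite /W0 /W1 !dk_sym //; last by lia.
have -> : (2 ^ r + 3 - 0 = 2^r + 3)%N by lia.
have -> : (2 ^ r + 3 - 2^r = 3)%N by lia.
by rewrite addrC.
Qed.

Lemma W1_cmpl r t : (3 <= r)%N -> (t <= 2^r+3)%N -> W1 r (2^r + 3 - t)%N = W0 r t.
Proof.
move=> r3 tn; have h8 := m8 r3.
rewrite /W0 /W1 !dk_sym //; last by lia.
have -> : (2 ^ r + 3 - 3 = 2^r)%N by lia.
have -> : (2 ^ r + 3 - (2^r + 3) = 0)%N by lia.
by rewrite addrC.
Qed.

Definition cX r : algC := (- 'i) ^+ (2^r+3).
Definition LX r : 'M[algC]_2 := mx2 0 (cX r) (cX r) 0.

Lemma Rep_X r : (3 <= r)%N -> Rep r Xg (LX r).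
Proof.
move=> r3 j y; rewrite /Xg tpow_anti sum2 !mxE /= -/(cX r).
have hle := hweight_le y.
rewrite !cwE hweight_cmpl.
case: j => [[|[|//]] Hj] /=; rewrite /Wf /=.
  by rewrite mul0r add0r W0_cmpl.
by rewrite mul0r addr0 W1_cmpl.
Qed.

Lemma Rep_mul r g h M N : Rep r g M -> Rep r h N -> Rep r (g *m h) (M *m N).
Proof.
move=> Hg Hh j y; rewrite tpow_mul.
rewrite (apply_ext _ (psi' := comb (codewords r) (fun l => N l j)) (Hh j)).
rewrite apply_comb.
under eq_bigr do rewrite Hg mulr_sumr.
rewrite exchange_big /=; apply: eq_bigr => l _; rewrite mxE mulr_suml.
by apply: eq_bigr => i _; rewrite mulrA [N i j * _]mulrC.
Qed.



Lemma root1_coprime (x : algC) n M : (0 < n)%N -> coprime n M ->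
  x ^+ n = 1 -> x ^+ M = 1 -> x = 1.
Proof.
move=> n0 cop xn xM.
case: (egcdnP M n0) => km kn E _.
rewrite (eqP cop) in E.
have : x ^+ (km * n) = x ^+ (kn * M + 1) by rewrite E.
by rewrite mulnC exprM xn expr1n exprD mulnC exprM xM expr1n mul1r expr1.
Qed.

Lemma odd_n r : (1 <= r)%N -> odd (2 ^ r + 3).
Proof. by case: r => [//|r] _; rewrite expnS oddD oddM. Qed.

Lemma zeta_cancel r k l : (3 <= r)%N ->
  zeta r ^+ (k * (2^r+3)) = zeta r ^+ (l * (2^r+3)) -> zeta r ^+ k = zeta r ^+ l.
Proof.
move=> r3 E.
pose rho := zeta r ^+ k * (zeta r)^-1 ^+ l.
have cop : coprime (2^r+3) (2^r.+1).
  by rewrite coprimeXr // coprimen2 odd_n //; apply: leq_trans r3.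
have r1 : rho = 1.
  apply: (root1_coprime _ cop); first by rewrite addnS.
    by rewrite /rho exprMn -!exprM E mulrC zetaV.
  rewrite /rho exprMn -!exprM mulnC exprM zeta2M expr1n mul1r.
  by rewrite mulnC exprM exprVn zeta2M invr1 expr1n.
have := congr1 (fun t => t * zeta r ^+ l) r1.
by rewrite /rho mul1r -mulrA [_ * zeta r ^+ l]zetaV mulr1.
Qed.

Lemma Dm_cancel r k l : (3 <= r)%N ->
  Dm r (k * (2^r+3)) = Dm r (l * (2^r+3)) -> Dm r k = Dm r l.
Proof.
move=> r3 /mx2_inj [_ _ _ E]; have E' := zeta_cancel r3 E.
by rewrite /Dm !exprVn E'.
Qed.

Lemma cX_neq0 r : cX r != 0.
Proof. by rewrite expf_neq0 // oppr_eq0 neq0Ci. Qed.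

Lemma DmLX r q : Dm r q *m LX r = mx2 0 ((zeta r)^-1 ^+ q * cX r) (zeta r ^+ q * cX r) 0.
Proof. by rewrite /Dm /LX mx2_mul !mulr0 !mul0r !addr0 !add0r. Qed.

Definition Lam r (g : 'M[algC]_2) : 'M[algC]_2 :=
  \matrix_(j, k) inner (codewords r j) (apply_op (@tpow (2^r+3) g) (codewords r k)).

Lemma Rep_Lam r g M : (3 <= r)%N -> Rep r g M -> Lam r g = M.
Proof.
move=> r3 HR; apply/matrixP => j k; rewrite mxE.
rewrite (inner_ext (phi' := codewords r j) (psi' := fun y => \sum_(l < 2) M l k * codewords r l y)) //.
rewrite /inner.
under eq_bigr do rewrite mulr_sumr.
rewrite exchange_big /= (bigD1 j) //= [X in _ + X]big1 ?addr0.
  have O : inner (codewords r j) (codewords r j) = 1 by rewrite orthonormal // eqxx.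
  rewrite -[RHS]mulr1 -O /inner mulr_sumr.
  by apply: eq_bigr => x _; rewrite mulrCA.
move=> l lj.
have : \sum_x (codewords r j x)^* * (codewords r l x) = 0.
  by have := orthonormal j l r3; rewrite eq_sym (negbTE lj).
move=> E; transitivity (M l k * \sum_x (codewords r j x)^* * codewords r l x); last by rewrite E mulr0.
by rewrite mulr_sumr; apply: eq_bigr => x _; rewrite mulrCA.
Qed.

Lemma Lam_cases r g : (3 <= r)%N -> inQ r g ->
  Rep r g (Lam r g) /\
  exists k, (g = Dm r k /\ Lam r g = Dm r (k * (2^r+3)))
         \/ (g = Dm r k *m Xg /\ Lam r g = Dm r (k * (2^r+3)) *m LX r).
Proof.
move=> r3 Hg.
have [k [->|->]] := classify (leq_trans (isT : (1 <= 3)%N) r3) Hg.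
  have R := Rep_Dm k r3; rewrite (Rep_Lam r3 R); split => //.
  by exists k; left.
have R := Rep_mul (Rep_Dm k r3) (Rep_X r3); rewrite (Rep_Lam r3 R); split => //.
by exists k; right.
Qed.



Definition rv2 (x y : algC) : 'rV[algC]_2 := \row_j (if val j == 0%N then x else y).

Lemma rv2_mul x y a b c d : rv2 x y *m mx2 a b c d = rv2 (x * a + y * c) (x * b + y * d).
Proof.
apply/matrixP => i j; rewrite !mxE big_ord_recr big_ord1 /= !mxE.
by case: j => [[|[|//]] ?].
Qed.

Lemma rv2_eta (v : 'rV[algC]_2) : v = rv2 (v ord0 ord0) (v ord0 ord_max).
Proof.
apply/matrixP => i j; rewrite !mxE (ord1 i).
by case: j => [[|[|//]] ?] /=; congr (v _ _); apply: val_inj.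
Qed.

Lemma rv2_scale s x y : s *: rv2 x y = rv2 (s * x) (s * y).
Proof. by apply/matrixP => i j; rewrite !mxE; case: ifP. Qed.

Lemma rv2_add x y x' y' : rv2 x y + rv2 x' y' = rv2 (x + x') (y + y').
Proof. by apply/matrixP => i j; rewrite !mxE; case: ifP. Qed.

Lemma rv2_eq0 x y : (rv2 x y == 0) = (x == 0) && (y == 0).
Proof.
apply/eqP/andP => [E|[/eqP -> /eqP ->]].
  have e1 := congr1 (fun A : 'rV_2 => A ord0 ord0) E.
  have e2 := congr1 (fun A : 'rV_2 => A ord0 ord_max) E.
  by move: e1 e2; rewrite !mxE /= => -> ->.
by apply/matrixP => i j; rewrite !mxE; case: ifP.
Qed.

Lemma row1_2 (i : 'I_2) : row i (1%:M : 'M[algC]_2) = if val i == 0%N then rv2 1 0 else rv2 0 1.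
Proof.
apply/matrixP => k j; rewrite !mxE.
by case: i => [[|[|//]] ?]; case: j => [[|[|//]] ?]; rewrite !mxE.
Qed.

Lemma irred_core (a b c : algC) (U : 'M[algC]_2) : a != b -> c != 0 ->
  (U *m mx2 a 0 0 b <= U)%MS -> (U *m mx2 0 c c 0 <= U)%MS -> U = 0 \/ row_full U.
Proof.
move=> ab c0 HD HX.
have clos : forall (v : 'rV_2) (M : 'M_2), (U *m M <= U)%MS -> (v <= U)%MS -> (v *m M <= U)%MS.
  by move=> v M HM vU; apply: submx_trans HM; apply: submxMr.
have lin : forall (v w : 'rV_2) s t, (v <= U)%MS -> (w <= U)%MS -> ((s *: v + t *: w)%R <= U)%MS.
  by move=> v w s t vU wU; apply: addmx_sub; apply: scalemx_sub.
case: (eqVneq U 0) => [->|U0]; [by left | right].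
have [i vi] : exists i, row i U != 0.
  apply/existsP; rewrite -negb_forall; apply/negP => /forallP H.
  by move/negP: U0; apply; apply/eqP/row_matrixP => i; rewrite row0; apply/eqP/H.
have vU := row_sub i U.
move: vi vU; rewrite [row i U]rv2_eta; set x := row i U ord0 ord0; set y := row i U ord0 ord_max.
rewrite rv2_eq0 negb_and => nz vU.
have e01 : ((rv2 1 0 <= U)%MS -> (rv2 0 1 <= U)%MS) /\ ((rv2 0 1 <= U)%MS -> (rv2 1 0 <= U)%MS).
  split => H.
    have := lin _ _ (c^-1) 0 (clos _ _ HX H) H; rewrite rv2_mul scale0r addr0 rv2_scale.
    have -> : rv2 (c^-1 * (1 * 0 + 0 * c)) (c^-1 * (1 * c + 0 * 0)) = rv2 0 1.
      by congr rv2; field.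
    by [].
  have := lin _ _ (c^-1) 0 (clos _ _ HX H) H; rewrite rv2_mul scale0r addr0 rv2_scale.
  have -> : rv2 (c^-1 * (0 * 0 + 1 * c)) (c^-1 * (0 * c + 1 * 0)) = rv2 1 0.
    by congr rv2; field.
  by [].
have both : (rv2 1 0 <= U)%MS /\ (rv2 0 1 <= U)%MS.
  case/orP: nz => nz.
    have H : (rv2 1 0 <= U)%MS.
      have := lin _ _ (x * (a - b))^-1 (- (x * (a - b))^-1 * b) (clos _ _ HD vU) vU.
      rewrite rv2_mul !rv2_scale rv2_add.
      have -> : (x * (a - b))^-1 * (x * a + y * 0) + - (x * (a - b))^-1 * b * x = 1.
        by field; rewrite subr_eq0 ab nz.
      have -> : (x * (a - b))^-1 * (x * 0 + y * b) + - (x * (a - b))^-1 * b * y = 0 by ring.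
      by [].
    by split => //; apply: e01.1.
  have H : (rv2 0 1 <= U)%MS.
    have := lin _ _ (y * (b - a))^-1 (- (y * (b - a))^-1 * a) (clos _ _ HD vU) vU.
    rewrite rv2_mul !rv2_scale rv2_add.
    have -> : (y * (b - a))^-1 * (x * a + y * 0) + - (y * (b - a))^-1 * a * x = 0 by ring.
    have -> : (y * (b - a))^-1 * (x * 0 + y * b) + - (y * (b - a))^-1 * a * y = 1.
      by field; rewrite subr_eq0 eq_sym ab nz.
    by [].
  by split => //; apply: e01.2.
rewrite -sub1mx; apply/row_subP => k; rewrite row1_2.
by case: ifP => _; [exact: both.1 | exact: both.2].
Qed.



Lemma Dm_unit r q : Dm r q \in unitmx.
Proof.
have [] := @mulmx1_unit _ _ (Dm r q) (mx2 (zeta r ^+ q) 0 0 ((zeta r)^-1 ^+ q)) => //.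
by rewrite /Dm mx2_mul !mulr0 !mul0r !addr0 !add0r zetaV mulrC zetaV mx2_one.
Qed.

Lemma LX_unit r : LX r \in unitmx.
Proof.
have [] := @mulmx1_unit _ _ (LX r) (mx2 0 (cX r)^-1 (cX r)^-1 0) => //.
by rewrite /LX mx2_mul !mulr0 !mul0r !addr0 !add0r divff ?cX_neq0 // mx2_one.
Qed.

Lemma ab_neq r : (3 <= r)%N -> (zeta r)^-1 ^+ (2^r+3) != zeta r ^+ (2^r+3).
Proof.
move=> r3; apply/negP => /eqP E.
have z2n : zeta r ^+ (2 * (2^r+3)) = 1.
  by rewrite mulnC exprM expr2 -[X in X * _]E zetaV.
have z6 : zeta r ^+ 6 = 1.
  by move: z2n; rewrite mulnDr -expnS exprD zeta2M mul1r.
have : zeta r ^+ (3 * 2^r) = 1.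
  have -> : (3 * 2^r = 6 * 2^r.-1)%N.
    have h : (2^r = 2 * 2^r.-1)%N by rewrite -expnS prednK //; apply: leq_trans r3.
    lia.
  by rewrite exprM z6 expr1n.
rewrite mulnC exprM zetaM -signr_odd /= => /eqP.
by rewrite eq_sym -subr_eq0 opprK -mulr2n pnatr_eq0.
Qed.

Lemma Lam_inj r g h : (3 <= r)%N -> inQ r g -> inQ r h -> Lam r g = Lam r h -> g = h.
Proof.
move=> r3 Hg Hh E.
have [_ [k [[Eg Lg]|[Eg Lg]]]] := Lam_cases r3 Hg;
have [_ [l [[Eh Lh]|[Eh Lh]]]] := Lam_cases r3 Hh; rewrite Eg Eh; rewrite Lg Lh in E.
- by apply: Dm_cancel.
- move: E; rewrite DmLX /Dm => /mx2_inj [_ E _ _]; exfalso; move/eqP: E; apply/negP.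
  by rewrite eq_sym mulf_neq0 ?cX_neq0 // expf_neq0 // invr_eq0 zeta_neq0.
- move: E; rewrite DmLX /Dm => /mx2_inj [_ E _ _]; exfalso; move/eqP: E; apply/negP.
  by rewrite mulf_neq0 ?cX_neq0 // expf_neq0 // invr_eq0 zeta_neq0.
- move: E; rewrite !DmLX => /mx2_inj [_ _ E _].
  have E2 := mulIf (cX_neq0 r) E.
  by congr (_ *m _); rewrite /Dm !exprVn (zeta_cancel r3 E2).
Qed.

Lemma trans_main r : (3 <= r)%N -> G_transversal (codewords r) (inQ r).
Proof.
move=> r3; exists (Lam r); split; last first.
  by move=> g Hg k y; have [R _] := Lam_cases r3 Hg; apply: R.
split.
- move=> g Hg; have [_ [k [[_ ->]|[_ ->]]]] := Lam_cases r3 Hg; first exact: Dm_unit.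
  by rewrite unitmx_mul Dm_unit LX_unit.
- move=> g h Hg Hh; apply: Rep_Lam => //.
  by apply: Rep_mul; [exact: (Lam_cases r3 Hg).1 | exact: (Lam_cases r3 Hh).1].
- by move=> g h Hg Hh; apply: Lam_inj.
- move=> U HU.
  apply: (@irred_core ((zeta r)^-1 ^+ (2^r+3)) (zeta r ^+ (2^r+3)) (cX r)).
  + exact: ab_neq.
  + exact: cX_neq0.
  + have := HU _ (Dm_inQ r 1); rewrite (Rep_Lam r3 (Rep_Dm 1 r3)) /Dm mx2_tr mul1n.
    by [].
  + have := HU _ (inQX r); rewrite (Rep_Lam r3 (Rep_X r3)) /LX mx2_tr.
    by [].
Qed.


Local Close Scope ring_scope.

Theorem mainTheorem7 (r : nat) : (3 <= r)%N ->
  [/\ is_code 3 (codewords r),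
      non_additive (codewords r),
      perm_invariant (codewords r)
    & G_transversal (codewords r) (inQ r)].
Proof.
move=> r3; split; [exact: is_code_main | exact: nonadd_main | exact: perm_main | exact: trans_main].
Qed.
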